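(* Let $A=KQ/I$ be a finite-dimensional gentle algebra and let $B$ be a band for $A$ with an auto-reaching, i.e. there are a finite substring $L$ on top of $B^\infty$ and a finite substring $L'$ at the bottom of $B^\infty$ which are equal as strings (either $L'=L$ or $L'=L^{-1}$ as walks). Then $\ell(L)\le\ell(B)-2$.
   Context: Letters are arrows $\alpha\in Q_1$ (direct letters, traversed from $s(\alpha)$ to $t(\alpha)$) and formal inverses $\alpha^{-1}$ (inverse letters, traversed from $t(\alpha)$ to $s(\alpha)$). A string is a reduced walk (no letter followed by its own inverse) in $Q$ avoiding the relations of $I$ and their inverses; a string is identified with its inverse walk; $\ell$ denotes length (number of letters). A band is a closed walk $B=b_1\cdots b_m$ ($m\ge1$) all of whose powers are strings, considered up to rotation and inversion; $\ell(B)=m$. $B^\infty$ is the bi-infinite walk $\cdots b_1\cdots b_m b_1\cdots b_m\cdots$. A finite consecutive subwalk $L$ of $B^\infty$ (possibly of length $0$) is on top of $B^\infty$ if the letter immediately before $L$ is an inverse letter and the letter immediately after $L$ is a direct letter (i.e. the adjacent arrows point away from $L$); it is at the bottom if the letter immediately before is direct and the letter immediately after is inverse (the adjacent arrows point into $L$). *)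

(* Defs.v *)
From mathcomp Require Import all_boot.
Set Implicit Arguments. Unset Strict Implicit. Unset Printing Implicit Defensive.

Section Gentle.
Variables (V E : finType) (s t : E -> V) (rel : E -> E -> bool).
(* rel a b  <=>  the length-2 path "a then b" (t a = s b) is a generator of I. *)

Definition arrow_path (p : seq E) : bool :=
  if p is a :: q then path (fun a b => t a == s b) a q else true.
Definition rel_free (p : seq E) : bool :=
  if p is a :: q then path (fun a b => ~~ rel a b) a q else true.

Definition gentle : Prop :=
  (forall a b, rel a b -> t a = s b) /\
  (forall v, #|[pred a | s a == v]| <= 2) /\
  (forall v, #|[pred a | t a == v]| <= 2) /\
  (forall a, #|[pred b | (t a == s b) && rel a b]| <= 1) /\
  (forall a, #|[pred b | (t a == s b) && ~~ rel a b]| <= 1) /\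
  (forall a, #|[pred c | (t c == s a) && rel c a]| <= 1) /\
  (forall a, #|[pred c | (t c == s a) && ~~ rel c a]| <= 1) /\
  (* finite dimensionality (admissibility): paths avoiding I have bounded length *)
  (exists N, forall p, arrow_path p -> rel_free p -> size p <= N).

(* Letters: (a, true) is the direct letter a, (a, false) its formal inverse. *)
Definition letter := (E * bool)%type.
Definition lstart (x : letter) : V := if x.2 then s x.1 else t x.1.
Definition lend (x : letter) : V := if x.2 then t x.1 else s x.1.
Definition linv (x : letter) : letter := (x.1, ~~ x.2).

Definition string_step (x y : letter) : bool :=
  [&& lend x == lstart y,
      ~~ ((x.1 == y.1) && (x.2 != y.2)),            (* reduced *)
      ~~ [&& x.2, y.2 & rel x.1 y.1] &
      ~~ [&& ~~ x.2, ~~ y.2 & rel y.1 x.1]].        (* avoids inverse relations *)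

Definition is_string_word (w : seq letter) : bool :=
  if w is x :: w' then path string_step x w' else true.

Definition is_band (B : seq letter) : Prop :=
  if B is x :: B' then
    lend (last x B') = lstart x /\
    forall n, 0 < n -> is_string_word (flatten (nseq n B))
  else False.

(* Walks: start vertex together with the word (needed for length 0). *)
Definition walk := (V * seq letter)%type.
Definition wend (w : walk) : V := last w.1 (map lend w.2).
Definition winv (w : walk) : walk := (wend w, rev (map linv w.2)).

Definition window (B : seq letter) (i n : nat) : seq letter :=
  take n (drop i (flatten (nseq (i + n) B))).

Definition on_top (B : seq letter) (i : nat) (L : walk) : Prop :=
  exists y z, window B i (size L.2 + 2) = y :: rcons L.2 z /\
    y.2 = false /\ z.2 = true /\ L.1 = lend y.

Definition at_bottom (B : seq letter) (i : nat) (L : walk) : Prop :=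
  exists y z, window B i (size L.2 + 2) = y :: rcons L.2 z /\
    y.2 = true /\ z.2 = false /\ L.1 = lend y.

End Gentle.

(* Main.v *)
Require Import Defs.
From mathcomp Require Import all_boot.
From mathcomp Require Import zify.

Lemma nth_flat_nseq (T : Type) (d : T) (B : seq T) N p :
  p < N * size B -> nth d (flatten (nseq N B)) p = nth d B (p %% size B).
Proof.
elim: N p => [|N IH] p //=.
rewrite mulSn nth_cat => Hp.
case: ltnP => Hpm.
  by rewrite modn_small.
rewrite IH; last by lia.
by rewrite -{2}(subnK Hpm) modnDr.
Qed.

Lemma nth_window (E : finType) (d : letter E) (B : seq (letter E)) i n k :
  0 < size B -> k < n -> nth d (window B i n) k = nth d B ((i + k) %% size B).
Proof.
move=> HB Hk; rewrite /window nth_take // nth_drop nth_flat_nseq //.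
have : (i + n) <= (i + n) * size B by rewrite leq_pmulr.
lia.
Qed.

Theorem mainTheorem6 (V E : finType) (s t : E -> V) (rel : E -> E -> bool)
  (Hgentle : gentle s t rel)
  (B : seq (letter E)) (HB : is_band s t rel B)
  (L L' : walk V E) (i j : nat)
  (Htop : on_top s t B i L) (Hbot : at_bottom s t B j L')
  (Heq : L' = L \/ L' = winv s t L) :
  size L.2 + 2 <= size B.
Proof.
case: B HB Htop Hbot => [|x B'] // _.
set B := x :: B'.
have Hm : 0 < size B by [].
set m := size B.
move=> [y [z [Wt [yt [zt _]]]]] [y' [z' [Wb [yb [zb _]]]]].
set n := size L.2 in Wt *.
have HL' : size L'.2 = n.
  case: Heq => -> //; by rewrite /winv /= size_rev size_map.
rewrite HL' in Wb.
pose P q := nth x B (q %% m).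
have Ti : P i = y.
  have H := @nth_window _ x B i (n + 2) 0 Hm ltac:(lia); rewrite Wt addn0 /= in H; by rewrite /P -H.
have Tk : forall k, k < n -> P (i + k.+1) = nth x L.2 k.
  move=> k Hk; have H := @nth_window _ x B i (n + 2) k.+1 Hm ltac:(lia); rewrite Wt /= nth_rcons Hk in H; by rewrite /P -H.
have Te : P (i + n.+1) = z.
  have H := @nth_window _ x B i (n + 2) n.+1 Hm ltac:(lia); rewrite Wt /= nth_rcons ltnn eqxx in H; by rewrite /P -H.
have Bj : P j = y'.
  have H := @nth_window _ x B j (n + 2) 0 Hm ltac:(lia); rewrite Wb addn0 /= in H; by rewrite /P -H.
have Bk : forall k, k < n -> P (j + k.+1) = nth x L'.2 k.
  move=> k Hk; have H := @nth_window _ x B j (n + 2) k.+1 Hm ltac:(lia); rewrite Wb /= nth_rcons HL' Hk in H; by rewrite /P -H.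
have Per : forall q, P (q + m) = P q by move=> q; rewrite /P modnDr.
case: (leqP (n + 2) m) => // Hnm; exfalso.
case: (ltnP n m) => Hnm2.
  have Hn : n.+1 = m by lia.
  move: (Per i); rewrite -Hn Te Ti => Hyz.
  by move: yt zt; rewrite Hyz => ->.
have Ai : P (i + m) = nth x L.2 m.-1.
  have -> : i + m = i + (m.-1).+1 by lia.
  apply: Tk; lia.
have Aj : P (j + m) = nth x L'.2 m.-1.
  have -> : j + m = j + (m.-1).+1 by lia.
  apply: Bk; lia.
case: Heq => HL.
  move: (Per i) (Per j); rewrite Ai Aj Ti Bj HL => H1 H2.
  by move: yt yb; rewrite -H1 -H2 => ->.
have E1 : i + n.+1 = (i + (n - m).+1) + m by lia.
move: (Per (i + (n - m).+1)); rewrite -E1 Te Tk; last lia.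
move=> Hz.
move: (Per j); rewrite Aj Bj HL /winv /=.
have HmB : m = (size B').+1 by [].
rewrite nth_rev; last by rewrite size_map -/n; lia.
rewrite size_map -/n (nth_map x); last lia.
have -> : n - (size B').+1 = n - m by lia.
rewrite -Hz => Hy.
by move: yb; rewrite -Hy /linv /= zt.
Qed.
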